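(* For any parameters $l_c>1$ and $r_c\in(0,1)$ let $(e^{2u(t)}(ds^2+d\theta^2))_{t\in[0,\infty)}$ be the corresponding cb-Ricci flow. Then \[ u(t,s) \ge -\log\cosh(s-s_b) + \tfrac12\log\bigl(2(1-t)\bigr) \] for all $(t,s)\in[0,1)\times\mathbb R$.
   Context: Setting (cb-surface): for a length $l_c>0$ and radius $r_c\in(0,1)$, the cb-surface is the rotationally symmetric plane $(\mathbb C,g_{\mathsf{cb}})$ with $g_{\mathsf{cb}}=e^{2u_{\mathsf{cb}}(s)}(ds^2+d\theta^2)$ in logarithmic cylindrical coordinates $z=e^{-s+s_e+i\theta}$, $(s,\theta)\in\mathbb R\times[0,2\pi)$, where $u_{\mathsf{cb}}(s)=-s+s_e$ for $s\le s_0$; $u_{\mathsf{cb}}(s)=-\log(r_c^{-1}\cos(r_cs+l_c))$ for $s\in(s_0,-l_c/r_c)$; $u_{\mathsf{cb}}(s)=\log r_c$ for $s\in[-l_c/r_c,0]$; $u_{\mathsf{cb}}(s)=-\log(r_c^{-1}\cos(r_cs))$ for $s\in(0,s_2]$; $u_{\mathsf{cb}}(s)=-\log\cosh(s-s_b)+\frac12\log2$ for $s>s_2$; with parameters $s_0\in(-(l_c+\pi/2)/r_c,-l_c/r_c)$, $s_e\in(s_0,-l_c/r_c)$, $s_2\in(0,\pi/(2r_c))$, $s_b>s_2$ chosen uniquely so that $u_{\mathsf{cb}}\in C^1(\mathbb R)$. The cb-Ricci flow is the Ricci flow $g(t)=e^{2u(t)}(ds^2+d\theta^2)$ on $\mathbb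 C$ with $g(0)=g_{\mathsf{cb}}$ which is instantaneously complete ($g(t)$ complete for $t>0$) and maximally stretched (for any Ricci flow $\tilde g(t)$ on $\mathbb C$, $t\in[0,\tilde T]$, with $\tilde g(0)\le g(0)$, one has $\tilde g(t)\le g(t)$), which exists and is unique for all time. *)

(* Defs.v *)
From Stdlib Require Import Reals Lra List.
From Coquelicot Require Import Coquelicot.
Open Scope R_scope.

Definition u_cb (l_c r_c s0 se s2 sb : R) (s : R) : R :=
  if Rle_dec s s0 then - s + se
  else if Rlt_dec s (- l_c / r_c) then - ln (/ r_c * cos (r_c * s + l_c))
  else if Rle_dec s 0 then ln r_c
  else if Rle_dec s s2 then - ln (/ r_c * cos (r_c * s))
  else - ln (cosh (s - sb)) + / 2 * ln 2.

(** Admissible parameters: the ranges of the paper plus u_cb in C^1(R)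
    (which determines s0, se, s2, sb uniquely). *)
Definition cb_params (l_c r_c s0 se s2 sb : R) : Prop :=
  0 < l_c /\ 0 < r_c < 1 /\
  - (l_c + PI / 2) / r_c < s0 < - l_c / r_c /\
  s0 < se < - l_c / r_c /\
  0 < s2 < PI / (2 * r_c) /\
  s2 < sb /\
  (forall s, ex_derive (u_cb l_c r_c s0 se s2 sb) s) /\
  (forall s, continuous (Derive (u_cb l_c r_c s0 se s2 sb)) s).

(** * Metrics on C = R^2 in conformal form  g = e^{2 v} (dx^2 + dy^2).
    A time-dependent metric is  v : R (time) -> R (x) -> R (y) -> R.
    Log-cylindrical coordinates z = e^{-s+se+i theta} give
    e^{2u}(ds^2+dtheta^2) = e^{2v}|dz|^2 with u = v + log|z| = v - s + se. *)

Definition pd (i : nat) (f : R -> R -> R -> R) : R -> R -> R -> R :=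
  match i with
  | O => fun t x y => Derive (fun a => f a x y) t
  | 1%nat => fun t x y => Derive (fun a => f t a y) x
  | _ => fun t x y => Derive (fun a => f t x a) y
  end.

Definition ex_pd (i : nat) (f : R -> R -> R -> R) (t x y : R) : Prop :=
  match i with
  | O => ex_derive (fun a => f a x y) t
  | 1%nat => ex_derive (fun a => f t a y) x
  | _ => ex_derive (fun a => f t x a) y
  end.

Definition iter_pd (l : list nat) (f : R -> R -> R -> R) : R -> R -> R -> R :=
  fold_right pd f l.

Definition cont_in (D : R -> R -> R -> Prop) (f : R -> R -> R -> R)
  (t x y : R) : Prop :=
  forall eps, 0 < eps -> exists del, 0 < del /\
    forall t' x' y', D t' x' y' -> Rabs (t' - t) < del -> Rabs (x' - x) < del ->
      Rabs (y' - y) < del -> Rabs (f t' x' y' - f t x y) < eps.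

Definition full (t x y : R) : Prop := True.

Definition smooth_on (D : R -> R -> R -> Prop) (f : R -> R -> R -> R) : Prop :=
  forall (l : list nat) (t x y : R), D t x y ->
    (forall i, ex_pd i (iter_pd l f) t x y) /\ cont_in full (iter_pd l f) t x y.

Definition open_slab (T : Rbar) (t x y : R) : Prop := 0 < t /\ Rbar_lt t T.
Definition closed_slab (T : Rbar) (t x y : R) : Prop := 0 <= t /\ Rbar_lt t T.

(** Ricci flow g(t) = e^{2v(t)}(dx^2+dy^2) on C, t in [0,T):
    smooth for t in (0,T), solving  d_t v = e^{-2v} (v_xx + v_yy)
    (i.e. d_t g = -2 K g), and attaining its initial metric
    g(0) = e^{2 v(0)} continuously (locally uniformly). *)
Definition ricci_flow (T : Rbar) (v : R -> R -> R -> R) : Prop :=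
  smooth_on (open_slab T) v /\
  (forall t x y, open_slab T t x y ->
     pd 0 v t x y = exp (- 2 * v t x y) *
       (pd 1%nat (pd 1%nat v) t x y + pd 2%nat (pd 2%nat v) t x y)) /\
  (forall t x y, closed_slab T t x y -> cont_in (closed_slab T) v t x y).

(** Completeness of the conformal metric e^{2w}(dx^2+dy^2) on R^2:
    metric balls about the origin are Euclidean-bounded (equivalent to
    completeness by Hopf-Rinow): any C^1 curve from 0 reaching Euclidean
    norm >= M has length >= L. *)
Definition complete_conformal (w : R -> R -> R) : Prop :=
  forall L : R, exists M : R, forall g1 g2 : R -> R,
    (forall a, ex_derive g1 a /\ ex_derive g2 a) ->
    (forall a, continuous (Derive g1) a /\ continuous (Derive g2) a) ->
    g1 0 = 0 -> g2 0 = 0 -> M <= sqrt (g1 1 ^ 2 + g2 1 ^ 2) ->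
    L <= RInt (fun a => exp (w (g1 a) (g2 a)) *
                        sqrt (Derive g1 a ^ 2 + Derive g2 a ^ 2)) 0 1.

(** The cb-Ricci flow: Ricci flow on C for t in [0,oo) with g(0) = g_cb
    (the identity holding on C minus the origin, hence everywhere by
    continuity), instantaneously complete and maximally stretched. *)
Definition cb_ricci_flow (l_c r_c s0 se s2 sb : R) (v : R -> R -> R -> R) : Prop :=
  ricci_flow p_infty v /\
  (forall s theta,
     v 0 (exp (- s + se) * cos theta) (exp (- s + se) * sin theta) + (- s + se)
     = u_cb l_c r_c s0 se s2 sb s) /\
  (forall t, 0 < t -> complete_conformal (v t)) /\
  (forall (T' : R) (w : R -> R -> R -> R), 0 < T' -> ricci_flow (Finite T') w ->
     (forall x y, w 0 x y <= v 0 x y) ->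
     forall t x y, 0 <= t < T' -> w t x y <= v t x y).

(* Main.v *)
Require Import Defs.
From Stdlib Require Import Reals Lra List.
From Coquelicot Require Import Coquelicot.
Open Scope R_scope.

Lemma inv_sum_ge2 (p : R) : 0 < p -> 2 <= p + / p.
Proof.
  intros Hp. assert (Hq : p * / p = 1) by (field; lra).
  assert (0 < / p) by (apply Rinv_0_lt_compat; lra).
  assert (0 <= (p - 1) * (p - 1) * / p) by (apply Rmult_le_pos; [pose proof (Rle_0_sqr (p - 1)); unfold Rsqr in *; lra | lra]).
  assert ((p - 1) * (p - 1) * / p = p + / p - 2) by (field; lra).
  lra.
Qed.

Lemma cosh_ge1 x : 1 <= cosh x.
Proof.
  unfold cosh. rewrite exp_Ropp. pose proof (inv_sum_ge2 (exp x) (exp_pos x)). lra.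
Qed.

Lemma sinh_ge d : 0 <= d -> d <= sinh d.
Proof.
  intros Hd.
  set (g := fun x => sinh x - x).
  assert (Hl : forall x, derivable_pt_lim g x (cosh x - 1)).
  { intros x. unfold g. apply (derivable_pt_lim_minus sinh id).
    apply derivable_pt_lim_sinh. apply derivable_pt_lim_id. }
  pose (pr := fun x => exist (fun l => derivable_pt_abs g x l) (cosh x - 1) (Hl x) : derivable_pt g x).
  assert (Hi : increasing g).
  { apply (nonneg_derivative_1 g pr). intros x. simpl. pose proof (cosh_ge1 x). lra. }
  specialize (Hi 0 d Hd). unfold g in Hi. rewrite sinh_0 in Hi. lra.
Qed.

Lemma cosh_mono x y : 0 <= y -> y <= x -> cosh y <= cosh x.
Proof.
  intros Hy Hxy. unfold cosh. rewrite !exp_Ropp.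
  set (X := exp x). set (Y := exp y).
  assert (HY : 1 <= Y). { unfold Y. destruct (Req_dec y 0). subst; rewrite exp_0; lra.
    pose proof (exp_ineq1 y H). lra. }
  assert (HXY : Y <= X). { unfold X, Y. destruct (Req_dec y x). subst; lra.
    left. apply exp_increasing. lra. }
  assert (X * /X = 1) by (field; lra). assert (Y * / Y = 1) by (field; lra).
  assert (/X <= / Y) by (apply Rinv_le_contravar; lra).
  assert (/X * /Y <= 1).
  { assert (0 < /X) by (apply Rinv_0_lt_compat; lra). assert (0 < /Y) by (apply Rinv_0_lt_compat; lra).
    nra. }
  assert (X + /X - (Y + /Y) = (X - Y) * (1 - /X * /Y)) by (field; lra).
  assert (0 <= (X - Y) * (1 - /X * /Y)) by (apply Rmult_le_pos; lra).
  lra.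
Qed.

Lemma cosh_even x : cosh (- x) = cosh x.
Proof. unfold cosh. rewrite Ropp_involutive. lra. Qed.

Lemma junction_der (f g : R -> R) x l lg :
  derivable_pt_lim f x l -> derivable_pt_lim g x lg ->
  (forall e, 0 < e -> exists h, h <> 0 /\ Rabs h < e /\ f (x + h) = g (x + h)) ->
  f x = g x -> l = lg.
Proof.
  intros Hf Hg Hfg Hx.
  destruct (Req_dec l lg) as [|Hne]; auto. exfalso.
  set (eps := Rabs (l - lg) / 2).
  assert (Heps : 0 < eps) by (unfold eps; apply Rdiv_lt_0_compat; [apply Rabs_pos_lt; lra | lra]).
  destruct (Hf eps Heps) as [d1 Hd1]. destruct (Hg eps Heps) as [d2 Hd2].
  destruct (Hfg (Rmin d1 d2)) as [h [Hh0 [Hh Hfh]]].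
  { apply Rmin_pos; apply cond_pos. }
  assert (Rabs h < d1) by (eapply Rlt_le_trans; [exact Hh| apply Rmin_l]).
  assert (Rabs h < d2) by (eapply Rlt_le_trans; [exact Hh| apply Rmin_r]).
  specialize (Hd1 h Hh0 H). specialize (Hd2 h Hh0 H0).
  rewrite Hfh, Hx in Hd1.
  assert (Rabs (l - lg) <= Rabs ((g (x + h) - g x) / h - l) + Rabs ((g (x + h) - g x) / h - lg)).
  { replace (l - lg) with (- ((g (x + h) - g x) / h - l) + ((g (x + h) - g x) / h - lg)) by ring.
    eapply Rle_trans. apply Rabs_triang. rewrite Rabs_Ropp. lra. }
  unfold eps in *. lra.
Qed.

Lemma junction_val (f g : R -> R) x l lg :
  derivable_pt_lim f x l -> derivable_pt_lim g x lg ->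
  (forall e, 0 < e -> exists h, h <> 0 /\ Rabs h < e /\ f (x + h) = g (x + h)) ->
  f x = g x.
Proof.
  intros Hf Hg Hfg.
  assert (Cf := derivable_continuous_pt f x (exist _ l Hf)).
  assert (Cg := derivable_continuous_pt g x (exist _ lg Hg)).
  destruct (Req_dec (f x) (g x)) as [|Hne]; auto. exfalso.
  set (eps := Rabs (f x - g x) / 2).
  assert (Heps : 0 < eps) by (unfold eps; apply Rdiv_lt_0_compat; [apply Rabs_pos_lt; lra | lra]).
  destruct (Cf eps Heps) as [d1 [Hd1p Hd1]]. destruct (Cg eps Heps) as [d2 [Hd2p Hd2]].
  destruct (Hfg (Rmin d1 d2)) as [h [Hh0 [Hh Hfh]]].
  { apply Rmin_pos; auto. }
  assert (Rabs h < d1) by (eapply Rlt_le_trans; [exact Hh| apply Rmin_l]).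
  assert (Rabs h < d2) by (eapply Rlt_le_trans; [exact Hh| apply Rmin_r]).
  assert (Dx : D_x no_cond x (x + h)) by (split; [exact I | lra]).
  assert (Ds : R_dist (x + h) x = Rabs h) by (unfold R_dist; f_equal; ring).
  assert (E1 : dist R_met (f (x + h)) (f x) < eps).
  { apply Hd1. split; auto. simpl. unfold R_dist. replace (x + h - x) with h by ring. auto. }
  assert (E2 : dist R_met (g (x + h)) (g x) < eps).
  { apply Hd2. split; auto. simpl. unfold R_dist. replace (x + h - x) with h by ring. auto. }
  simpl in E1, E2. unfold R_dist in E1, E2. rewrite Hfh in E1.
  assert (Rabs (f x - g x) <= Rabs (g (x + h) - f x) + Rabs (g (x + h) - g x)).
  { replace (f x - g x) with (- (g (x + h) - f x) + (g (x + h) - g x)) by ring.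
    eapply Rle_trans. apply Rabs_triang. rewrite Rabs_Ropp. lra. }
  unfold eps in *. lra.
Qed.

Lemma cosh_sub a d : cosh (a - d) = cosh a * cosh d - sinh a * sinh d.
Proof.
  unfold cosh, sinh. replace (a - d) with (a + - d) by ring.
  replace (- (a + - d)) with (- a + d) by ring.
  rewrite !exp_plus, !exp_Ropp.
  assert (0 < exp a) by apply exp_pos. assert (0 < exp d) by apply exp_pos.
  field; lra.
Qed.

Lemma p3 r s2 sb s : 0 < r -> 0 < s2 -> s2 < sb ->
  / r * cos (r * s2) = cosh (s2 - sb) / sqrt 2 ->
  sin (r * s2) = - sinh (s2 - sb) / sqrt 2 ->
  0 <= s <= s2 -> / r * cos (r * s) <= cosh (s - sb) / sqrt 2.
Proof.
  intros Hr Hs2 Hsb HC HS Hs.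
  set (d := s2 - s).
  assert (Hd : 0 <= d) by (unfold d; lra).
  replace (r * s) with (r * s2 - r * d) by (unfold d; ring).
  replace (s - sb) with ((s2 - sb) - d) by (unfold d; ring).
  rewrite cos_minus, cosh_sub.
  set (a := s2 - sb) in *.
  assert (HK : 0 < sqrt 2) by (apply sqrt_lt_R0; lra).
  assert (Hsa : sinh a <= 0). { rewrite <- sinh_0. left. apply sinh_lt. unfold a; lra. }
  assert (Hca : 0 < cosh a) by (pose proof (cosh_ge1 a); lra).
  set (C := / r * cos (r * s2)) in *.
  set (S := sin (r * s2)) in *.
  assert (HC0 : 0 <= C) by (rewrite HC; apply Rlt_le, Rdiv_lt_0_compat; lra).
  assert (HS0 : 0 <= S).
  { rewrite HS. unfold Rdiv. apply Rmult_le_pos. lra. left. apply Rinv_0_lt_compat. lra. }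
  assert (E1 : / r * (cos (r * s2) * cos (r * d) + S * sin (r * d)) =
               C * cos (r * d) + S * (sin (r * d) / r)) by (unfold C; field; lra).
  assert (E2 : (cosh a * cosh d - sinh a * sinh d) / sqrt 2 = C * cosh d + S * sinh d)
    by (rewrite HC, HS; field; lra).
  fold S. rewrite E1, E2.
  assert (Hcos : cos (r * d) <= cosh d) by (pose proof (COS_bound (r * d)); pose proof (cosh_ge1 d); lra).
  assert (Hsin : sin (r * d) / r <= sinh d).
  { apply Rle_trans with d; [| apply sinh_ge; auto].
    apply (Rmult_le_reg_l r); auto.
    replace (r * (sin (r * d) / r)) with (sin (r * d)) by (field; lra).
    destruct (Req_dec d 0) as [->|Hd0].
    - rewrite Rmult_0_r, sin_0. lra.
    - left. apply sin_lt_x. apply Rmult_lt_0_compat; lra. }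
  apply Rplus_le_compat; apply Rmult_le_compat_l; auto.
Qed.

Lemma ln_sqrt2 : ln (sqrt 2) = / 2 * ln 2.
Proof.
  assert (HK : 0 < sqrt 2) by (apply sqrt_lt_R0; lra).
  assert (ln 2 = ln (sqrt 2 * sqrt 2)) by (rewrite sqrt_sqrt; lra).
  rewrite ln_mult in H by auto. lra.
Qed.

Lemma test r s2 : 0 < r -> 0 < cos (r * s2) ->
  is_derive (fun s => - ln (/ r * cos (r * s))) s2 (r * sin (r * s2) / cos (r * s2)).
Proof.
  intros. auto_derive.
  - apply Rmult_lt_0_compat; auto. apply Rinv_0_lt_compat; auto.
  - field. split; lra.
Qed.

Lemma test2 sb s2 :
  is_derive (fun s => - ln (cosh (s - sb)) + / 2 * ln 2) s2 (- sinh (s2 - sb) / cosh (s2 - sb)).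
Proof.
  unfold cosh, sinh. auto_derive; replace (s2 + - sb) with (s2 - sb) by ring;
  pose proof (exp_pos (s2 - sb)); pose proof (exp_pos (-(s2 - sb))).
  - lra.
  - field. lra.
Qed.

Lemma ucb_lower l r s0 se s2 sb : cb_params l r s0 se s2 sb ->
  forall s, - ln (cosh (s - sb)) + / 2 * ln 2 <= u_cb l r s0 se s2 sb s.
Proof.
  intros [Hl [[Hr0 Hr1] [[Hs0a Hs0b] [[Hsea Hseb] [[Hs2a Hs2b] [Hsb [Hder _]]]]]]].
  assert (HL : - l / r < 0) by (apply Ropp_lt_cancel; unfold Rdiv; rewrite Ropp_0, Ropp_mult_distr_l, Ropp_involutive; apply Rdiv_lt_0_compat; lra).
  assert (Hrs2 : r * s2 < PI / 2).
  { replace (PI / 2) with (r * (PI / (2 * r))) by (field; lra). apply Rmult_lt_compat_l; lra. }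
  assert (Hrs2p : 0 < r * s2) by (apply Rmult_lt_0_compat; lra).
  assert (Hcos2 : 0 < cos (r * s2)) by (apply cos_gt_0; lra).
  set (u := u_cb l r s0 se s2 sb).
  set (g1 := fun s => - ln (/ r * cos (r * s))).
  set (g2 := fun s => - ln (cosh (s - sb)) + / 2 * ln 2).
  destruct (Hder s2) as [lu Hlu].
  apply is_derive_Reals in Hlu.
  assert (Hg1 := test r s2 Hr0 Hcos2). apply is_derive_Reals in Hg1.
  assert (Hg2 := test2 sb s2). apply is_derive_Reals in Hg2.
  assert (Hu1 : forall h, - s2 < h <= 0 -> u (s2 + h) = g1 (s2 + h)).
  { intros h Hh. unfold u, u_cb, g1.
    destruct (Rle_dec (s2 + h) s0); [lra|].
    destruct (Rlt_dec (s2 + h) (- l / r)); [lra|].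
    destruct (Rle_dec (s2 + h) 0); [lra|].
    destruct (Rle_dec (s2 + h) s2); [reflexivity|lra]. }
  assert (Hu2 : forall h, 0 < h -> u (s2 + h) = g2 (s2 + h)).
  { intros h Hh. unfold u, u_cb, g2.
    destruct (Rle_dec (s2 + h) s0); [lra|].
    destruct (Rlt_dec (s2 + h) (- l / r)); [lra|].
    destruct (Rle_dec (s2 + h) 0); [lra|].
    destruct (Rle_dec (s2 + h) s2); [lra|reflexivity]. }
  assert (Hus2 : u s2 = g1 s2).
  { rewrite <- (Rplus_0_r s2). apply Hu1. lra. }
  assert (HV : u s2 = g2 s2).
  { apply (junction_val u g2 s2 lu _ Hlu Hg2).
    intros e He. exists (e / 2). split; [lra|]. split.
    - rewrite Rabs_pos_eq; lra.
    - apply Hu2; lra. }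
  assert (HD1 : lu = r * sin (r * s2) / cos (r * s2)).
  { apply (junction_der u g1 s2 lu _ Hlu Hg1); auto.
    intros e He. exists (- Rmin e s2 / 2).
    assert (0 < Rmin e s2) by (apply Rmin_pos; lra).
    assert (Rmin e s2 <= e) by apply Rmin_l. assert (Rmin e s2 <= s2) by apply Rmin_r.
    split; [lra|]. split.
    - rewrite Rabs_left; lra.
    - apply Hu1; lra. }
  assert (HD2 : lu = - sinh (s2 - sb) / cosh (s2 - sb)).
  { apply (junction_der u g2 s2 lu _ Hlu Hg2); auto.
    intros e He. exists (e / 2). split; [lra|]. split.
    - rewrite Rabs_pos_eq; lra.
    - apply Hu2; lra. }
  assert (HK : 0 < sqrt 2) by (apply sqrt_lt_R0; lra).
  assert (Hch : forall x, 0 < cosh x) by (intros x; pose proof (cosh_ge1 x); lra).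
  assert (Hlnf : forall x, - ln (cosh x) + / 2 * ln 2 = - ln (cosh x / sqrt 2)).
  { intros x. unfold Rdiv. rewrite ln_mult, ln_Rinv, ln_sqrt2; auto.
    lra. apply Rinv_0_lt_compat; auto. }
  assert (HC : / r * cos (r * s2) = cosh (s2 - sb) / sqrt 2).
  { rewrite Hus2 in HV. unfold g1, g2 in HV. rewrite Hlnf in HV.
    apply ln_inv.
    apply Rmult_lt_0_compat; auto. apply Rinv_0_lt_compat; auto.
    apply Rdiv_lt_0_compat; auto. lra. }
  assert (HS : sin (r * s2) = - sinh (s2 - sb) / sqrt 2).
  { assert (E : sin (r * s2) = (r * sin (r * s2) / cos (r * s2)) * (/ r * cos (r * s2)))
      by (field; lra).
    rewrite E, <- HD1, HD2, HC. field. split; [lra|]. pose proof (Hch (s2 - sb)); lra. }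
  assert (H0 : / r <= cosh (0 - sb) / sqrt 2).
  { pose proof (p3 r s2 sb 0 Hr0 Hs2a Hsb HC HS ltac:(lra)) as P.
    rewrite Rmult_0_r, cos_0, Rmult_1_r in P. exact P. }
  assert (Hmono : forall s, s <= 0 -> cosh (0 - sb) <= cosh (s - sb)).
  { intros s Hs. rewrite <- (cosh_even (0 - sb)), <- (cosh_even (s - sb)).
    apply cosh_mono; lra. }
  assert (Hneg : forall s, s <= 0 -> / r <= cosh (s - sb) / sqrt 2).
  { intros s Hs. eapply Rle_trans; [exact H0|]. unfold Rdiv.
    apply Rmult_le_compat_r. left; apply Rinv_0_lt_compat; auto. auto. }
  assert (Hrinv : 1 < / r).
  { rewrite <- Rinv_1. apply Rinv_lt_contravar; lra. }
  intros s. rewrite Hlnf.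
  assert (Hfin : forall X, 0 < X -> X <= cosh (s - sb) / sqrt 2 ->
            - ln (cosh (s - sb) / sqrt 2) <= - ln X).
  { intros X HX HXc. apply Ropp_le_contravar. apply ln_le; auto. }
  unfold u, u_cb.
  destruct (Rle_dec s s0).
  { replace (- s + se) with (- ln (exp (s - se))) by (rewrite ln_exp; ring).
    apply Hfin. apply exp_pos.
    assert (exp (s - se) < 1) by (rewrite <- exp_0; apply exp_increasing; lra).
    pose proof (Hneg s ltac:(lra)). lra. }
  destruct (Rlt_dec s (- l / r)).
  { assert (Hrs : - (l + PI / 2) < r * s + l - l /\ r * s + l < 0).
    { split.
      - replace (- (l + PI / 2)) with (r * (- (l + PI / 2) / r)) by (field; lra).
        replace (r * s + l - l) with (r * s) by ring.
        apply Rmult_lt_compat_l; lra.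
      - replace 0 with (r * (- l / r) + l) by (field; lra).
        apply Rplus_lt_compat_r. apply Rmult_lt_compat_l; lra. }
    assert (0 < cos (r * s + l)) by (apply cos_gt_0; lra).
    apply Hfin. apply Rmult_lt_0_compat; auto. apply Rinv_0_lt_compat; auto.
    pose proof (COS_bound (r * s + l)). pose proof (Hneg s ltac:(lra)).
    assert (/ r * cos (r * s + l) <= / r * 1).
    { apply Rmult_le_compat_l. left; apply Rinv_0_lt_compat; auto. lra. }
    lra. }
  destruct (Rle_dec s 0).
  { replace (ln r) with (- ln (/ r)) by (rewrite ln_Rinv; auto; ring).
    apply Hfin. apply Rinv_0_lt_compat; auto. apply Hneg; auto. }
  destruct (Rle_dec s s2).
  { assert (0 < cos (r * s)).
    { apply cos_gt_0.
      - assert (0 < r * s) by (apply Rmult_lt_0_compat; lra). lra.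
      - assert (r * s <= r * s2) by (apply Rmult_le_compat_l; lra). lra. }
    apply Hfin. apply Rmult_lt_0_compat; auto. apply Rinv_0_lt_compat; auto.
    apply p3 with s2; auto. lra. }
  rewrite <- Hlnf. lra.
Qed.

Inductive exq : Type :=
| ECst (c : R) | EVT | EVX | EVY | EAdd (a b : exq) | EMul (a b : exq) | EInv (a : exq) | ELn (a : exq).

Fixpoint ev (e : exq) (t x y : R) : R :=
  match e with
  | ECst c => c | EVT => t | EVX => x | EVY => y
  | EAdd a b => ev a t x y + ev b t x y
  | EMul a b => ev a t x y * ev b t x y
  | EInv a => / ev a t x y
  | ELn a => ln (ev a t x y)
  end.

Fixpoint dr (i : nat) (e : exq) : exq :=
  match e with
  | ECst _ => ECst 0
  | EVT => match i with O => ECst 1 | _ => ECst 0 end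
  | EVX => match i with 1%nat => ECst 1 | _ => ECst 0 end
  | EVY => match i with O => ECst 0 | 1%nat => ECst 0 | _ => ECst 1 end
  | EAdd a b => EAdd (dr i a) (dr i b)
  | EMul a b => EAdd (EMul (dr i a) b) (EMul a (dr i b))
  | EInv a => EMul (ECst (-1)) (EMul (dr i a) (EMul (EInv a) (EInv a)))
  | ELn a => EMul (dr i a) (EInv a)
  end.

Definition U1 (t x y : R) : Prop := t < 1.

Fixpoint wf (e : exq) : Prop :=
  match e with
  | EAdd a b | EMul a b => wf a /\ wf b
  | EInv a => wf a /\ (forall t x y, U1 t x y -> ev a t x y <> 0)
  | ELn a => wf a /\ (forall t x y, U1 t x y -> 0 < ev a t x y)
  | _ => True
  end.

Lemma wf_dr i e : wf e -> wf (dr i e).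
Proof.
  induction e; simpl; intro Hw.
  all: try (destruct i as [|[|i]]; simpl; tauto).
  all: try tauto.
  destruct Hw as [Ha Hn]. repeat split; auto. intros t x y Ht. specialize (Hn t x y Ht). lra.
Qed.

Definition line (i : nat) (f : R -> R -> R -> R) (t x y : R) : R -> R :=
  match i with
  | O => fun z => f z x y
  | 1%nat => fun z => f t z y
  | _ => fun z => f t x z
  end.
Definition coord (i : nat) (t x y : R) : R :=
  match i with O => t | 1%nat => x | _ => y end.

Lemma pd_line i f t x y : pd i f t x y = Derive (line i f t x y) (coord i t x y).
Proof. destruct i as [|[|i]]; reflexivity. Qed.
Lemma ex_pd_line i f t x y : ex_pd i f t x y = ex_derive (line i f t x y) (coord i t x y).
Proof. destruct i as [|[|i]]; reflexivity. Qed.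
Lemma line_coord i f t x y : line i f t x y (coord i t x y) = f t x y.
Proof. destruct i as [|[|i]]; reflexivity. Qed.

Lemma isd_const (c z : R) : is_derive (fun _ : R => c) z 0.
Proof. exact (is_derive_const c z). Qed.
Lemma isd_id (z : R) : is_derive (fun x : R => x) z 1.
Proof. exact (is_derive_id z). Qed.
Lemma isd_eq (f : R -> R) z l l' : is_derive f z l -> l = l' -> is_derive f z l'.
Proof. intros H ->; exact H. Qed.

Lemma is_derive_ev i e : wf e -> forall t x y, U1 t x y ->
  is_derive (line i (ev e) t x y) (coord i t x y) (ev (dr i e) t x y).
Proof.
  induction e; intros Hw t x y Ht; simpl in Hw.
  - destruct i as [|[|i]]; simpl; apply isd_const.
  - destruct i as [|[|i]]; simpl; [apply isd_id| apply isd_const | apply isd_const].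
  - destruct i as [|[|i]]; simpl; [apply isd_const| apply isd_id | apply isd_const].
  - destruct i as [|[|i]]; simpl; [apply isd_const| apply isd_const | apply isd_id].
  - destruct Hw as [Ha Hb].
    assert (E : line i (ev (EAdd e1 e2)) t x y = fun z => line i (ev e1) t x y z + line i (ev e2) t x y z)
      by (destruct i as [|[|i]]; reflexivity).
    rewrite E. simpl.
    apply (is_derive_plus (line i (ev e1) t x y) (line i (ev e2) t x y)); auto.
  - destruct Hw as [Ha Hb].
    assert (E : line i (ev (EMul e1 e2)) t x y = fun z => line i (ev e1) t x y z * line i (ev e2) t x y z)
      by (destruct i as [|[|i]]; reflexivity).
    rewrite E. simpl.
    eapply isd_eq.
    { apply (is_derive_mult (line i (ev e1) t x y) (line i (ev e2) t x y)); auto.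
      intros; apply Rmult_comm. }
    rewrite !line_coord. reflexivity.
  - destruct Hw as [Ha Hn].
    assert (E : line i (ev (EInv e)) t x y = fun z => / line i (ev e) t x y z)
      by (destruct i as [|[|i]]; reflexivity).
    rewrite E.
    assert (Hnz := Hn t x y Ht).
    eapply isd_eq.
    { apply (is_derive_inv (line i (ev e) t x y)); auto. rewrite line_coord; auto. }
    rewrite line_coord. simpl. field. auto.
  - destruct Hw as [Ha Hn].
    assert (E : line i (ev (ELn e)) t x y = fun z => ln (line i (ev e) t x y z))
      by (destruct i as [|[|i]]; reflexivity).
    rewrite E.
    assert (Hp := Hn t x y Ht).
    eapply isd_eq.
    { apply (is_derive_comp ln (line i (ev e) t x y)); auto.
      rewrite line_coord. apply is_derive_ln; auto. }
    reflexivity.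
Qed.

Definition F3 (f : R -> R -> R -> R) : R * R * R -> R :=
  fun q => f (fst (fst q)) (snd (fst q)) (snd q).

Lemma cont_ev e : wf e -> forall t x y, U1 t x y -> continuous (F3 (ev e)) ((t, x), y).
Proof.
  induction e; intros Hw t x y Ht; simpl in Hw; unfold F3; simpl.
  - apply continuous_const.
  - apply (continuous_comp fst fst). apply continuous_fst. apply continuous_fst.
  - apply (continuous_comp fst snd). apply continuous_fst. apply continuous_snd.
  - apply continuous_snd.
  - destruct Hw. apply (continuous_plus (F3 (ev e1)) (F3 (ev e2))); auto.
  - destruct Hw. apply (continuous_mult (F3 (ev e1)) (F3 (ev e2))); auto.
  - destruct Hw as [Hw Hn]. apply (continuous_comp (F3 (ev e)) Rinv); auto.
    apply continuous_Rinv. apply Hn; auto.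
  - destruct Hw as [Hw Hn]. apply (continuous_comp (F3 (ev e)) ln); auto.
    apply continuous_ln. apply Hn; auto.
Qed.

Lemma cont_conv f t x y : continuous (F3 f) ((t, x), y) -> cont_in full f t x y.
Proof.
  intros Hc eps Heps.
  destruct (proj1 (filterlim_locally _ _) Hc (mkposreal eps Heps)) as [d Hd].
  exists d. split. apply cond_pos.
  intros t' x' y' _ H1 H2 H3.
  specialize (Hd ((t', x'), y')). unfold F3 in Hd; simpl in Hd.
  apply Hd. repeat split; assumption.
Qed.

Definition Dl (l : list nat) (e : exq) : exq := fold_right dr e l.

Lemma wf_Dl l e : wf e -> wf (Dl l e).
Proof. induction l; simpl; auto. intros. apply wf_dr. auto. Qed.

Lemma loc_line i t x y (g h : R -> R -> R -> R) : U1 t x y ->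
  (forall t x y, U1 t x y -> g t x y = h t x y) ->
  locally (coord i t x y) (fun z => line i g t x y z = line i h t x y z).
Proof.
  intros Ht H. destruct i as [|[|i]]; simpl.
  - assert (Hp : 0 < 1 - t) by (unfold U1 in Ht; lra).
    exists (mkposreal _ Hp). intros z Hz. apply H.
    unfold ball in Hz; simpl in Hz; unfold AbsRing_ball, abs, minus, plus, opp in Hz; simpl in Hz.
    apply Rabs_def2 in Hz. unfold U1. lra.
  - apply filter_forall. intros. apply H; auto.
  - apply filter_forall. intros. apply H; auto.
Qed.

Lemma iter_ev l e : wf e -> forall t x y, U1 t x y -> iter_pd l (ev e) t x y = ev (Dl l e) t x y.
Proof.
  intros Hw. induction l as [|i l IH]; intros t x y Ht; simpl; auto.
  rewrite pd_line.
  rewrite (Derive_ext_loc _ (line i (ev (Dl l e)) t x y)).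
  - apply is_derive_unique. apply is_derive_ev; auto. apply wf_Dl; auto.
  - apply loc_line; auto.
Qed.

Lemma cont_in_U1 (f g : R -> R -> R -> R) t x y : U1 t x y ->
  (forall t x y, U1 t x y -> f t x y = g t x y) -> cont_in full f t x y -> cont_in full g t x y.
Proof.
  intros Ht Hfg Hc eps Heps. destruct (Hc eps Heps) as [d [Hd Hd2]].
  assert (Hp : 0 < 1 - t) by (unfold U1 in Ht; lra).
  exists (Rmin d (1 - t)). split. apply Rmin_pos; auto.
  intros t' x' y' _ H1 H2 H3.
  assert (Rabs (t' - t) < d) by (eapply Rlt_le_trans; [exact H1| apply Rmin_l]).
  assert (Rabs (t' - t) < 1 - t) by (eapply Rlt_le_trans; [exact H1| apply Rmin_r]).
  apply Rabs_def2 in H0.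
  rewrite <- (Hfg t' x' y'), <- (Hfg t x y) by (unfold U1; lra).
  apply Hd2; auto. exact I. all: eapply Rlt_le_trans; [eassumption | apply Rmin_l].
Qed.

Lemma smooth_ev e : wf e -> smooth_on (open_slab (Finite 1)) (ev e).
Proof.
  intros Hw l t x y [Ht0 Ht1]. simpl in Ht1.
  assert (Ht : U1 t x y) by exact Ht1.
  split.
  - intros i. rewrite ex_pd_line.
    apply (ex_derive_ext_loc (line i (ev (Dl l e)) t x y)).
    + apply loc_line; auto. intros. symmetry. apply iter_ev; auto.
    + eexists. apply is_derive_ev; auto. apply wf_Dl; auto.
  - apply (cont_in_U1 (ev (Dl l e))); auto.
    intros. symmetry. apply iter_ev; auto.
    apply cont_conv. apply cont_ev; auto. apply wf_Dl; auto.
Qed.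

Definition Wx (A : R) : exq :=
  EAdd (EMul (ECst (/ 2)) (ELn (EMul (ECst 2) (EAdd (ECst 1) (EMul (ECst (-1)) EVT)))))
      (EAdd (ECst (ln (2 * A))) (EMul (ECst (-1)) (ELn (EAdd (ECst (A * A)) (EAdd (EMul EVX EVX) (EMul EVY EVY)))))).

Lemma wf_W A : 0 < A -> wf (Wx A).
Proof.
  intros HA. simpl. repeat split; intros t x y Ht; unfold U1 in Ht.
  - lra.
  - nra.
Qed.

Lemma expW A t x y : 0 < A -> t < 1 ->
  exp (-2 * ev (Wx A) t x y) =
  (A * A + (x * x + y * y)) * (A * A + (x * x + y * y)) / (2 * (1 + -1 * t) * (2 * A) * (2 * A)).
Proof.
  intros HA Ht. simpl.
  set (P := 2 * (1 + -1 * t)). set (B := 2 * A). set (Q := A * A + (x * x + y * y)).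
  assert (HP : 0 < P) by (unfold P; lra). assert (HB : 0 < B) by (unfold B; lra).
  assert (HQ : 0 < Q) by (unfold Q; nra).
  replace (-2 * (/ 2 * ln P + (ln B + -1 * ln Q))) with (- ln P + (- ln B + (- ln B + (ln Q + ln Q)))) by field.
  rewrite !exp_plus, !exp_Ropp, !exp_ln by auto.
  field. split; lra.
Qed.

Lemma ricci_W A : 0 < A -> ricci_flow (Finite 1) (ev (Wx A)).
Proof.
  intros HA. assert (Hw := wf_W A HA). split; [|split].
  - apply smooth_ev; auto.
  - intros t x y [Ht0 Ht1]. simpl in Ht1.
    change (pd 0 (ev (Wx A)) t x y) with (iter_pd (0 :: nil)%nat (ev (Wx A)) t x y).
    change (pd 1%nat (pd 1%nat (ev (Wx A))) t x y) with (iter_pd (1 :: 1 :: nil)%nat (ev (Wx A)) t x y).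
    change (pd 2%nat (pd 2%nat (ev (Wx A))) t x y) with (iter_pd (2 :: 2 :: nil)%nat (ev (Wx A)) t x y).
    rewrite !iter_ev by (auto; exact Ht1).
    rewrite expW by auto.
    simpl.
    assert (0 < A * A + (x * x + y * y)) by nra.
    field. repeat split; lra.
  - intros t x y [Ht0 Ht1]. simpl in Ht1.
    intros eps Heps.
    destruct (cont_conv _ _ _ _ (cont_ev _ Hw t x y Ht1) eps Heps) as [d [Hd Hd2]].
    exists d. split; auto. intros. apply Hd2; auto. exact I.
Qed.

Lemma identW se sb t s th : t < 1 ->
  ev (Wx (exp (se - sb))) t (exp (- s + se) * cos th) (exp (- s + se) * sin th) + (- s + se)
  = - ln (cosh (s - sb)) + / 2 * ln (2 * (1 - t)).
Proof.
  intros Ht. simpl.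
  set (A := exp (se - sb)). set (r := exp (- s + se)).
  assert (HA : 0 < A) by apply exp_pos. assert (Hr : 0 < r) by apply exp_pos.
  assert (Hq : r * cos th * (r * cos th) + r * sin th * (r * sin th) = r * r).
  { pose proof (sin2_cos2 th). unfold Rsqr in H. nra. }
  rewrite Hq. replace (1 + -1 * t) with (1 - t) by ring.
  assert (Hc : cosh (s - sb) = (A * A + r * r) / (2 * A * r)).
  { assert (E0 : A = exp (s - sb) * r) by (unfold A, r; rewrite <- exp_plus; f_equal; ring).
    assert (E1 : exp (s - sb) = A / r) by (rewrite E0; field; lra).
    unfold cosh. rewrite exp_Ropp, E1. field. split; lra. }
  rewrite Hc.
  rewrite ln_div by (nra || (apply Rmult_lt_0_compat; lra)).
  rewrite (ln_mult (2 * A) r) by lra.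
  assert (Hl : ln r = - s + se) by (unfold r; apply ln_exp).
  rewrite Hl. ring.
Qed.

Lemma polar x y : (x <> 0 \/ y <> 0) -> forall se, exists s th,
  x = exp (- s + se) * cos th /\ y = exp (- s + se) * sin th.
Proof.
  intros Hxy se.
  set (rho := sqrt (x * x + y * y)).
  assert (Hp : 0 < x * x + y * y) by (destruct Hxy; nra).
  assert (Hrho : 0 < rho) by (apply sqrt_lt_R0; auto).
  assert (Hrr : rho * rho = x * x + y * y) by (apply sqrt_sqrt; lra).
  exists (se - ln rho).
  replace (- (se - ln rho) + se) with (ln rho) by ring. rewrite exp_ln by auto.
  assert (Hb : -1 <= x / rho <= 1).
  { assert ((x / rho) * (x / rho) <= 1).
    { replace ((x / rho) * (x / rho)) with (x * x / (rho * rho)) by (field; lra).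
      rewrite Hrr. apply (Rmult_le_reg_r (x * x + y * y)); auto.
      replace (x * x / (x * x + y * y) * (x * x + y * y)) with (x * x) by (field; lra). nra. }
    nra. }
  assert (Hs : sqrt (1 - (x / rho)²) = Rabs (y / rho)).
  { rewrite <- sqrt_Rsqr_abs. f_equal. unfold Rsqr.
    replace (y / rho * (y / rho)) with (y * y / (rho * rho)) by (field; lra).
    replace (x / rho * (x / rho)) with (x * x / (rho * rho)) by (field; lra).
    rewrite Hrr. field. lra. }
  destruct (Rle_dec 0 y).
  - exists (acos (x / rho)). rewrite cos_acos, sin_acos by auto. rewrite Hs.
    rewrite Rabs_pos_eq. split; field; lra.
    apply Rdiv_le_0_compat; lra.
  - exists (- acos (x / rho)). rewrite cos_neg, sin_neg, cos_acos, sin_acos by auto. rewrite Hs.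
    rewrite Rabs_left. split; field; lra.
    unfold Rdiv. assert (0 < / rho) by (apply Rinv_0_lt_compat; lra). nra.
Qed.

Theorem lemma5p1 :
  forall (l_c r_c s0 se s2 sb : R) (v : R -> R -> R -> R),
    1 < l_c ->
    cb_params l_c r_c s0 se s2 sb ->
    cb_ricci_flow l_c r_c s0 se s2 sb v ->
    forall t s theta, 0 <= t < 1 ->
      v t (exp (- s + se) * cos theta) (exp (- s + se) * sin theta) + (- s + se)
      >= - ln (cosh (s - sb)) + / 2 * ln (2 * (1 - t)).
Proof.
  intros l r s0 se s2 sb v Hl Hp [[Hsm [Hpde Hcv]] [Hinit [Hcomp Hmax]]] t s th Ht.
  set (A := exp (se - sb)). assert (HA : 0 < A) by apply exp_pos.
  assert (Hw := wf_W A HA).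
  assert (Hnz : forall x y, x <> 0 \/ y <> 0 -> ev (Wx A) 0 x y <= v 0 x y).
  { intros x y Hxy. destruct (polar x y Hxy se) as [s' [th' [-> ->]]].
    pose proof (identW se sb 0 s' th' ltac:(lra)) as I1.
    pose proof (Hinit s' th') as I2.
    pose proof (ucb_lower _ _ _ _ _ _ Hp s') as I3.
    replace (2 * (1 - 0)) with 2 in I1 by ring. fold A in I1. lra. }
  assert (Hcmp : forall x y, ev (Wx A) 0 x y <= v 0 x y).
  { intros x y. destruct (Req_dec x 0) as [Hx|Hx]; [|apply Hnz; tauto].
    destruct (Req_dec y 0) as [Hy|Hy]; [|apply Hnz; tauto]. subst.
    apply Rnot_lt_le. intro Hlt.
    set (g := ev (Wx A) 0 0 0 - v 0 0 0).
    assert (Hg : 0 < g / 2) by (unfold g; lra).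
    destruct (Hcv 0 0 0 (conj (Rle_refl 0) I) (g / 2) Hg) as [d1 [Hd1 Hv1]].
    destruct (cont_conv _ _ _ _ (cont_ev _ Hw 0 0 0 ltac:(unfold U1; lra)) (g / 2) Hg) as [d2 [Hd2 Hw2]].
    set (x := Rmin d1 d2 / 2).
    assert (Hm : 0 < Rmin d1 d2) by (apply Rmin_pos; auto).
    assert (Rmin d1 d2 <= d1) by apply Rmin_l. assert (Rmin d1 d2 <= d2) by apply Rmin_r.
    assert (Hx0 : x <> 0) by (unfold x; lra).
    assert (Hax : Rabs (x - 0) < Rmin d1 d2) by (rewrite Rminus_0_r, Rabs_pos_eq; unfold x; lra).
    assert (Hz0 : Rabs (0 - 0) = 0) by (rewrite Rminus_0_r; apply Rabs_R0).
    assert (E1 := Hv1 0 x 0 (conj (Rle_refl 0) I) ltac:(lra) ltac:(lra) ltac:(lra)).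
    assert (E2 := Hw2 0 x 0 I ltac:(lra) ltac:(lra) ltac:(lra)).
    assert (E3 := Hnz x 0 (or_introl Hx0)).
    apply Rabs_def2 in E1. apply Rabs_def2 in E2. unfold g in *. lra. }
  assert (Hle := Hmax 1 (ev (Wx A)) Rlt_0_1 (ricci_W A HA) Hcmp t
                   (exp (- s + se) * cos th) (exp (- s + se) * sin th) Ht).
  pose proof (identW se sb t s th ltac:(lra)) as I1. fold A in I1.
  lra.
Qed.
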